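(* If $\mathcal{A}$ is a $(\kappa,\beta)$-single-parameter family of greedy heuristics for an object assignment problem with $n$ objects, and $\mathrm{cost}(A,x)$ is the objective value of the solution produced by $A$ on instance $x$, then the pseudo-dimension of $\mathcal{A}$ (as the class of functions $x\mapsto\mathrm{cost}(A,x)$) is $O(\log(\kappa\beta n))$.
   Context: Object assignment problem: an instance is a set of $n$ objects, each with attributes (an element $\xi$ of an abstract set); a feasible solution assigns each object a value in a finite set $R$ subject to feasibility constraints. Greedy heuristic: while unassigned objects remain, compute a score $\sigma(\xi_i)$ for each unassigned object $i$ from its current attributes $\xi_i$; take the unassigned object with highest score (ties broken lexicographically), and use an assignment rule to assign it a value in $R$ (some feasible choice always exists) and possibly update the attributes of other unassigned objects. A single-parameter family of scoring rules is a function $\sigma(\rho,\xi)$ for $\rho$ in an interval $I\subseteq\mathbb{R}$, continuous in $\rho$ for each fixed $\xi$; it is $\kappa$-crossing if for every pair of distinct attributes $\xi\neq\xi'$ there are at most $\kappa$ values of $\rho$ with $\sigma(\rho,\xi)=\sigma(\rho,\xi')$. An assignment rule is $\beta$-bounded if every object takes on at most $\beta$ distinct attribute values (over all executions). A $(\kappa,\beta)$-single-parameter family of greedy heuristics couples a $\kappa$-crossing single-parameter family of scoring rules with a fixed $\beta$-bounded assignment rule, giving one heuristic per $\rho\in I$. Pseudo-dimension: a finite set $\{x_1,\dots,x_m\}$ is shattered by a class $\mathcal{H}$ of real functions if there exist reals $r_1,\dots,r_m$ such that for every $T\subseteq\{1,\dots,m\}$ some $h\in\mathcal{H}$ has $h(x_i)>r_i\iff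 i\in T$; the pseudo-dimension is the largest size of a shattered set. *)

(* Defs.v *)
From Stdlib Require Import Reals List Arith.
From Stdlib Require Import FinFun.
Import ListNotations.
Open Scope R_scope.

Set Implicit Arguments.

Definition is_interval (I : R -> Prop) : Prop :=
  forall a b c, I a -> I c -> a <= b -> b <= c -> I b.

Definition continuous_on (I : R -> Prop) (f : R -> R) : Prop :=
  forall r, I r -> forall eps, 0 < eps -> exists delta, 0 < delta /\
    forall r', I r' -> Rabs (r' - r) < delta -> Rabs (f r' - f r) < eps.

Definition single_param_scoring (Xi : Type) (I : R -> Prop) (sigma : R -> Xi -> R) : Prop :=
  is_interval I /\ forall xi, continuous_on I (fun rho => sigma rho xi).

Definition kappa_crossing (Xi : Type) (I : R -> Prop) (sigma : R -> Xi -> R) (kappa : nat) : Prop :=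
  forall xi xi', xi <> xi' ->
    exists L : list R, (length L <= kappa)%nat /\
      forall rho, I rho -> sigma rho xi = sigma rho xi' -> In rho L.

Definition assignedb (Rv : Type) (asg : list (nat * Rv)) (j : nat) : bool :=
  existsb (fun p => Nat.eqb (fst p) j) asg.

Fixpoint lookup (Rv : Type) (asg : list (nat * Rv)) (j : nat) : option Rv :=
  match asg with
  | [] => None
  | (i, r) :: l => if Nat.eqb i j then Some r else lookup l j
  end.

(** Index among 0..k-1 satisfying ok with highest score; ties broken in
    favour of the lexicographically smallest (i.e. smallest) index. *)
Fixpoint best (sc : nat -> R) (ok : nat -> bool) (k : nat) : option nat :=
  match k with
  | O => None
  | S k' =>
      match best sc ok k' with
      | None => if ok k' then Some k' else None
      | Some j => if ok k' then (if Rlt_dec (sc j) (sc k') then Some k' else Some j)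
                  else Some j
      end
  end.

Definition gstate (Xi Rv : Type) : Type := (list (nat * Rv) * (nat -> Xi))%type.

(** One step of the greedy heuristic with score parameter rho and assignment
    rule [rule] (given the instance, the partial assignment, current attributes
    and the chosen object, it returns the value assigned to the chosen object and
    the updated attributes; only attributes of other unassigned objects change). *)
Definition gstep (Xi Rv X : Type) (n : nat) (sigma : R -> Xi -> R)
    (rule : X -> list (nat * Rv) -> (nat -> Xi) -> nat -> Rv * (nat -> Xi))
    (rho : R) (x : X) (s : gstate Xi Rv) : gstate Xi Rv :=
  let (asg, att) := s in
  match best (fun i => sigma rho (att i)) (fun i => negb (assignedb asg i)) n with
  | None => s
  | Some i =>
      let (r, att') := rule x asg att i in
      (asg ++ [(i, r)],
       fun j => if andb (negb (assignedb asg j)) (negb (Nat.eqb j i)) then att' j else att j)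
  end.

Definition gstate_at (Xi Rv X : Type) (n : nat) (sigma : R -> Xi -> R)
    (rule : X -> list (nat * Rv) -> (nat -> Xi) -> nat -> Rv * (nat -> Xi))
    (init : X -> nat -> Xi) (rho : R) (x : X) (t : nat) : gstate Xi Rv :=
  Nat.iter t (gstep n sigma rule rho x) ([], init x).

(** Solution produced: the value assigned to each object (after n steps every
    object j < n is assigned). *)
Definition gsolution (Xi Rv X : Type) (n : nat) (sigma : R -> Xi -> R)
    (rule : X -> list (nat * Rv) -> (nat -> Xi) -> nat -> Rv * (nat -> Xi))
    (init : X -> nat -> Xi) (rho : R) (x : X) : nat -> option Rv :=
  lookup (fst (gstate_at n sigma rule init rho x n)).

Definition beta_bounded (Xi Rv X : Type) (n : nat) (I : R -> Prop) (sigma : R -> Xi -> R)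
    (rule : X -> list (nat * Rv) -> (nat -> Xi) -> nat -> Rv * (nat -> Xi))
    (init : X -> nat -> Xi) (beta : nat) : Prop :=
  forall x i, (i < n)%nat ->
    exists L : list Xi, (length L <= beta)%nat /\
      forall rho t, I rho -> (t <= n)%nat ->
        In (snd (gstate_at n sigma rule init rho x t) i) L.

Definition shattered (X : Type) (I : R -> Prop) (f : R -> X -> R) (xs : list X) : Prop :=
  NoDup xs /\
  exists r : X -> R, forall T : X -> bool,
    exists rho, I rho /\ forall x, In x xs -> (f rho x > r x <-> T x = true).

Definition pdim_le (X : Type) (I : R -> Prop) (f : R -> X -> R) (d : R) : Prop :=
  forall xs, shattered I f xs -> INR (length xs) <= d.

(* Main.v *)
Require Import Defs.
From Stdlib Require Import Reals List Arith FinFun Lia Lra ClassicalEpsilon Classical.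
Import ListNotations.

Local Open Scope nat_scope.

Lemma sq_le10 : forall j, j * j <= 10 * 2 ^ j.
Proof.
  induction j as [|j IH]; [simpl; lia|].
  rewrite Nat.pow_succ_r'.
  destruct (Nat.lt_ge_cases j 3) as [H|H].
  - destruct j as [|[|[|j]]]; simpl; lia.
  - nia.
Qed.

Lemma arith_main : forall m K, 2 <= K -> 2 ^ m <= (m*m*(K*K)+1)*(m*m*(K*K)+1) ->
  m <= 55 * Nat.log2 K.
Proof.
  intros m K HK Hm.
  destruct (Nat.log2_spec K) as [Hk1 Hk2]; [lia|].
  set (k := Nat.log2 K) in *.
  assert (k1 : 1 <= k).
  { destruct k as [|k']; [simpl in Hk2; lia| lia]. }
  destruct m as [|m0]; [lia|]. set (m := S m0) in *.
  assert (H1 : (m*m*(K*K)+1)*(m*m*(K*K)+1) <= 4 * ((m*m*(m*m)) * (K*K*(K*K)))).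
  { assert (1 <= m*m*(K*K)) by (subst m; nia).
    replace (m*m*(m*m)*(K*K*(K*K))) with ((m*m*(K*K))*(m*m*(K*K))) by ring.
    set (a := m*m*(K*K)) in *. nia. }
  assert (H2 : K*K*(K*K) <= 2 ^ (8*k)).
  { assert (HK2 : K <= 2^(S k)) by lia.
    assert (K*K*(K*K) <= 2^(S k) * 2^(S k) * (2^(S k) * 2^(S k))).
    { apply Nat.mul_le_mono; apply Nat.mul_le_mono; exact HK2. }
    rewrite <- !Nat.pow_add_r in H.
    eapply Nat.le_trans; [exact H|]. apply Nat.pow_le_mono_r; lia. }
  set (m' := m / 8).
  assert (Hd : 8 * m' <= m < 8 * (m'+1)).
  { subst m'. pose proof (Nat.div_mod m 8). pose proof (Nat.mod_upper_bound m 8). lia. }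
  pose proof (sq_le10 (m'+1)) as Hs.
  assert (H3 : m*m*(m*m) <= 4096 * ((m'+1)*(m'+1)*((m'+1)*(m'+1)))).
  { assert (Hb : m <= 8*(m'+1)) by lia.
    assert (m*m*(m*m) <= (8*(m'+1))*(8*(m'+1))*((8*(m'+1))*(8*(m'+1)))).
    { apply Nat.mul_le_mono; apply Nat.mul_le_mono; exact Hb. }
    lia. }
  assert (H4 : (m'+1)*(m'+1)*((m'+1)*(m'+1)) <= 100 * 2^(2*m'+2)).
  { replace (2*m'+2) with ((m'+1)+(m'+1)) by lia. rewrite Nat.pow_add_r.
    replace (100 * (2 ^ (m'+1) * 2 ^ (m'+1))) with ((10 * 2^(m'+1)) * (10 * 2^(m'+1))) by ring.
    apply Nat.mul_le_mono; exact Hs. }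
  assert (H5 : 2 ^ (8*m') <= 2 ^ m) by (apply Nat.pow_le_mono_r; lia).
  assert (H6 : 2 ^ (8*m') <= 2^2 * (2^12 * (2^7 * 2^(2*m'+2))) * 2^(8*k)).
  { assert (E1 : 2^12 = 4096) by reflexivity.
    assert (E2 : 100 <= 2^7) by (simpl; lia).
    assert (E3 : 2^2 = 4) by reflexivity.
    assert (4 * ((m*m*(m*m)) * (K*K*(K*K))) <= 4 * ((4096 * (100 * 2^(2*m'+2))) * 2^(8*k))).
    { apply Nat.mul_le_mono_l. apply Nat.mul_le_mono; [|exact H2]. lia. }
    assert (4096 * (100 * 2^(2*m'+2)) <= 2^12 * (2^7 * 2^(2*m'+2))).
    { rewrite E1. apply Nat.mul_le_mono_l. apply Nat.mul_le_mono_r. exact E2. }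
    rewrite E3. 
    set (P := 2^(2*m'+2)) in *. set (Q := 2^(8*k)) in *. set (W := 2^12 * (2^7 * P)) in *.
    assert (4096 * (100 * P) * Q <= W * Q) by (apply Nat.mul_le_mono_r; assumption).
    lia. }
  rewrite <- !Nat.pow_add_r in H6.
  apply Nat.pow_le_mono_r_iff in H6; [|lia].
  lia.
Qed.

Open Scope R_scope.

Definition clamp a b r := Rmax a (Rmin b r).

Lemma clamp_in a b r : a <= b -> a <= clamp a b r <= b.
Proof. intros. unfold clamp, Rmax, Rmin. repeat destruct Rle_dec; lra. Qed.

Lemma clamp_id a b r : a <= r <= b -> clamp a b r = r.
Proof. intros. unfold clamp, Rmax, Rmin. repeat destruct Rle_dec; lra. Qed.

Lemma clamp_lip a b x y : a <= b -> Rabs (clamp a b y - clamp a b x) <= Rabs (y - x).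
Proof. intros. unfold clamp, Rmax, Rmin. repeat destruct Rle_dec; split_Rabs; lra. Qed.

Lemma clamp_cont (I : R -> Prop) f a b : is_interval I -> I a -> I b -> a <= b ->
  continuous_on I f -> continuity (fun r => f (clamp a b r)).
Proof.
  intros HI Ia Ib Hab Hf x. unfold continuity_pt, continue_in, limit1_in, limit_in.
  intros eps He.
  assert (Ic : I (clamp a b x)).
  { destruct (clamp_in a b x Hab). eapply HI; [exact Ia|exact Ib|lra|lra]. }
  destruct (Hf _ Ic eps He) as [d [Hd Hd']].
  exists d. split; [lra|]. intros y [_ Hy]. simpl in *. unfold R_dist in *.
  apply Hd'.
  - destruct (clamp_in a b y Hab). eapply HI; [exact Ia|exact Ib|lra|lra].
  - eapply Rle_lt_trans; [apply clamp_lip; exact Hab| exact Hy].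
Qed.

Lemma sign_const (I : R -> Prop) f a b : is_interval I -> I a -> I b -> a < b ->
  continuous_on I f -> (forall r, a <= r <= b -> f r <> 0) -> (f a < 0 <-> f b < 0).
Proof.
  intros HI Ia Ib Hab Hf Hnz.
  pose proof (clamp_cont I f a b HI Ia Ib (Rlt_le _ _ Hab) Hf) as Hc.
  assert (Ea : clamp a b a = a) by (apply clamp_id; lra).
  assert (Eb : clamp a b b = b) by (apply clamp_id; lra).
  assert (Na := Hnz a ltac:(lra)). assert (Nb := Hnz b ltac:(lra)).
  split; intro H1; destruct (Rlt_dec (f b) 0) as [|H2]; auto;
    destruct (Rlt_dec (f a) 0) as [H3|H3]; try lra.
  - destruct (IVT _ a b Hc Hab) as [z [Hz1 Hz2]]; [rewrite Ea; lra| rewrite Eb; lra|].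
    rewrite clamp_id in Hz2 by lra. exfalso; exact (Hnz z Hz1 Hz2).
  - exfalso.
    assert (Hc' : continuity (fun r => - f (clamp a b r))) by (apply continuity_opp; exact Hc).
    destruct (IVT _ a b Hc' Hab) as [z [Hz1 Hz2]]; [rewrite Ea; lra| rewrite Eb; lra|].
    rewrite clamp_id in Hz2 by lra. apply (Hnz z Hz1). lra.
Qed.

Lemma best_lt sc ok k j : best sc ok k = Some j -> (j < k)%nat.
Proof.
  revert j; induction k as [|k IH]; intros j H; simpl in H; [discriminate|].
  destruct (best sc ok k) as [j'|] eqn:E.
  - specialize (IH j' eq_refl). destruct (ok k); [destruct Rlt_dec|];
      injection H as <-; lia.
  - destruct (ok k); [injection H as <-; lia| discriminate].
Qed.

Lemma best_ext sc1 sc2 ok k :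
  (forall j l, (j < k)%nat -> (l < k)%nat -> j <> l -> (sc1 j < sc1 l <-> sc2 j < sc2 l)) ->
  best sc1 ok k = best sc2 ok k.
Proof.
  induction k as [|k IH]; intros H; [reflexivity|]. simpl.
  rewrite IH by (intros; apply H; lia).
  destruct (best sc2 ok k) as [j|] eqn:E; [|reflexivity].
  pose proof (best_lt _ _ _ _ E).
  destruct (ok k); [|reflexivity].
  specialize (H j k ltac:(lia) ltac:(lia) ltac:(lia)).
  destruct (Rlt_dec (sc1 j) (sc1 k)), (Rlt_dec (sc2 j) (sc2 k)); tauto.
Qed.

Lemma states_eq (Xi Rv X : Type) (n : nat) (sigma : R -> Xi -> R)
    (rule : X -> list (nat * Rv) -> (nat -> Xi) -> nat -> Rv * (nat -> Xi))
    (init : X -> nat -> Xi) (x : X) rho1 rho2 :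
  (forall t, (t < n)%nat -> forall j l, (j < n)%nat -> (l < n)%nat -> j <> l ->
     let att := snd (gstate_at n sigma rule init rho1 x t) in
     (sigma rho1 (att j) < sigma rho1 (att l) <-> sigma rho2 (att j) < sigma rho2 (att l))) ->
  forall t, (t <= n)%nat ->
    gstate_at n sigma rule init rho1 x t = gstate_at n sigma rule init rho2 x t.
Proof.
  intros H t. induction t as [|t IH]; intros Ht; [reflexivity|].
  change (gstate_at n sigma rule init rho1 x (S t)) with
    (gstep n sigma rule rho1 x (gstate_at n sigma rule init rho1 x t)).
  change (gstate_at n sigma rule init rho2 x (S t)) with
    (gstep n sigma rule rho2 x (gstate_at n sigma rule init rho2 x t)).
  rewrite <- IH by lia.
  specialize (H t ltac:(lia)).
  destruct (gstate_at n sigma rule init rho1 x t) as [asg att]. simpl in H.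
  unfold gstep. rewrite (best_ext _ (fun i => sigma rho2 (att i))); [reflexivity|].
  intros; apply H; assumption.
Qed.

Lemma collect {A Y : Type} (n beta : nat) (Q : A -> nat -> Y -> Prop) :
  (forall a i, (i < n)%nat -> exists L, (length L <= beta)%nat /\ forall y, Q a i y -> In y L) ->
  forall xs, exists V, (length V <= length xs * n * beta)%nat /\
    forall a i y, In a xs -> (i < n)%nat -> Q a i y -> In y V.
Proof.
  intros H xs. induction xs as [|a xs IH].
  - exists []. split; [simpl; lia|]. intros ? ? ? [].
  - destruct IH as [V [HV1 HV2]].
    assert (Hin : forall k, (k <= n)%nat -> exists W, (length W <= k * beta)%nat /\
       forall i y, (i < k)%nat -> Q a i y -> In y W).
    { induction k as [|k IHk]; intros Hk.
      - exists []. split; [simpl; lia|]. intros; lia.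
      - destruct (IHk ltac:(lia)) as [W [HW1 HW2]].
        destruct (H a k ltac:(lia)) as [L [HL1 HL2]].
        exists (L ++ W). split; [rewrite length_app; lia|].
        intros i y Hi Hq. apply in_or_app.
        destruct (Nat.eq_dec i k) as [->|]; [left; auto| right; apply (HW2 i); auto; lia]. }
    destruct (Hin n (le_n _)) as [W [HW1 HW2]].
    exists (W ++ V). split; [rewrite length_app; simpl; nia|].
    intros b i y [<-|Hb] Hi Hq; apply in_or_app; [left; eauto| right; eauto].
Qed.

Lemma breakpoints {Y : Type} (kappa : nat) (I : R -> Prop) (sigma : R -> Y -> R) :
  (forall a b, a <> b -> exists L : list R, (length L <= kappa)%nat /\
      forall rho, I rho -> sigma rho a = sigma rho b -> In rho L) ->
  forall P : list (Y * Y), exists B, (length B <= kappa * length P)%nat /\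
    forall a b, In (a, b) P -> a <> b -> forall rho, I rho -> sigma rho a = sigma rho b -> In rho B.
Proof.
  intros H P. induction P as [|[a b] P IH].
  - exists []. split; [simpl; lia|]. intros ? ? [].
  - destruct IH as [B [HB1 HB2]].
    destruct (classic (a = b)) as [E|E].
    + exists B. split; [simpl; lia|]. intros a' b' [Hp|Hp] Hne; [|eauto].
      injection Hp as <- <-. contradiction.
    + destruct (H a b E) as [L [HL1 HL2]].
      exists (L ++ B). split; [rewrite length_app; simpl; nia|].
      intros a' b' [Hp|Hp] Hne rho Ir Eq; apply in_or_app.
      * injection Hp as <- <-. left; auto.
      * right; eauto.
Qed.

Lemma filter_strict {A} (p q : A -> bool) (l : list A) b :
  (forall c, p c = true -> q c = true) -> In b l -> p b = false -> q b = true ->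
  (length (filter p l) < length (filter q l))%nat.
Proof.
  intros Hpq. induction l as [|c l IH]; intros Hb Hp Hq; [destruct Hb|].
  assert (Hle : forall l', (length (filter p l') <= length (filter q l'))%nat).
  { induction l' as [|d l' IH']; simpl; [lia|].
    destruct (p d) eqn:E; [rewrite (Hpq _ E); simpl; lia|destruct (q d); simpl; lia]. }
  destruct Hb as [->|Hb]; simpl.
  - rewrite Hp, Hq. simpl. specialize (Hle l). lia.
  - specialize (IH Hb Hp Hq). destruct (p c) eqn:E; [rewrite (Hpq _ E); simpl; lia|].
    destruct (q c); simpl; lia.
Qed.

Fixpoint blists (m : nat) : list (list bool) :=
  match m with
  | O => [[]]
  | S m' => map (cons true) (blists m') ++ map (cons false) (blists m')
  end.

Lemma blists_len m : length (blists m) = (2 ^ m)%nat.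
Proof. induction m; simpl; [reflexivity|]. rewrite length_app, !length_map, IHm. lia. Qed.

Lemma blists_in m l : In l (blists m) -> length l = m.
Proof.
  revert l; induction m; simpl; intros l H.
  - destruct H as [<-|[]]; reflexivity.
  - apply in_app_or in H. destruct H as [H|H]; apply in_map_iff in H;
      destruct H as [l' [<- H]]; simpl; rewrite (IHm _ H); reflexivity.
Qed.

Lemma blists_nodup m : NoDup (blists m).
Proof.
  induction m; simpl; [constructor; [intros []|constructor]|].
  apply NoDup_app.
  - apply Injective_map_NoDup; [intros a b E; injection E; auto| exact IHm].
  - apply Injective_map_NoDup; [intros a b E; injection E; auto| exact IHm].
  - intros l H1 H2. apply in_map_iff in H1, H2.
    destruct H1 as [? [<- _]]. destruct H2 as [? [E _]]. discriminate.
Qed.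

Lemma cont_diff (I : R -> Prop) f g : continuous_on I f -> continuous_on I g ->
  continuous_on I (fun r => f r - g r).
Proof.
  intros Hf Hg r Ir eps He.
  destruct (Hf r Ir (eps/2) ltac:(lra)) as [d1 [Hd1 H1]].
  destruct (Hg r Ir (eps/2) ltac:(lra)) as [d2 [Hd2 H2]].
  exists (Rmin d1 d2). split; [apply Rmin_pos; lra|].
  intros r' Ir' Hr.
  assert (A1 := H1 r' Ir' ltac:(pose proof (Rmin_l d1 d2); lra)).
  assert (A2 := H2 r' Ir' ltac:(pose proof (Rmin_r d1 d2); lra)).
  revert A1 A2. split_Rabs; lra.
Qed.

Fixpoint idx {X : Type} (xs : list X) (x : X) : nat :=
  match xs with
  | nil => O
  | cons y ys => if excluded_middle_informative (y = x) then O else S (idx ys x)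
  end.

Lemma idx_nth {X : Type} (xs : list X) d i : NoDup xs -> (i < length xs)%nat ->
  idx xs (nth i xs d) = i.
Proof.
  revert i; induction xs as [|y ys IH]; intros i Hnd Hi; simpl in Hi; [lia|].
  inversion Hnd as [|? ? Hy Hnd']; subst.
  destruct i as [|i]; simpl.
  - destruct excluded_middle_informative; congruence.
  - destruct excluded_middle_informative as [E|E].
    + exfalso. apply Hy. rewrite E. apply nth_In. lia.
    + rewrite IH; auto; lia.
Qed.

Theorem mainTheorem2 :
  exists C : R, 0 < C /\
  forall (Xi Rv X : Type) (n kappa beta : nat) (I : R -> Prop)
    (sigma : R -> Xi -> R)
    (rule : X -> list (nat * Rv) -> (nat -> Xi) -> nat -> Rv * (nat -> Xi))
    (init : X -> nat -> Xi)
    (feasible : X -> (nat -> option Rv) -> Prop)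
    (cost : X -> (nat -> option Rv) -> R),
    Finite Rv ->
    single_param_scoring I sigma ->
    kappa_crossing I sigma kappa ->
    beta_bounded n I sigma rule init beta ->
    (forall rho x, I rho -> feasible x (gsolution n sigma rule init rho x)) ->
    (1 <= kappa * beta * n)%nat ->
    pdim_le I (fun rho x => cost x (gsolution n sigma rule init rho x))
      (C * ln (INR (kappa * beta * n))).
Proof.
  assert (Hln2 : 0 < ln 2) by (rewrite <- ln_1; apply ln_increasing; lra).
  exists (55 / ln 2). split; [apply Rdiv_lt_0_compat; lra|].
  intros Xi Rv X n kappa beta I sigma rule init feasible cost _ [HI Hcont] Hk Hb _ HK.
  intros xs [Hnd [r Hsh]]. simpl in Hsh.
  set (K := (kappa * beta * n)%nat) in *.
  destruct (Nat.eq_dec K 1) as [K1|K2].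
  -
    rewrite K1. simpl INR. rewrite ln_1, Rmult_0_r.
    assert (n1 : n = 1%nat) by (unfold K in K1; apply Nat.eq_mul_1 in K1; tauto).
    destruct xs as [|x0 xs']; [simpl; lra|]. exfalso.
    destruct (Hsh (fun _ => true)) as [rho1 [I1 H1]].
    destruct (Hsh (fun _ => false)) as [rho2 [I2 H2]].
    assert (E : gsolution n sigma rule init rho1 x0 = gsolution n sigma rule init rho2 x0).
    { unfold gsolution. rewrite (states_eq _ _ _ n sigma rule init x0 rho1 rho2); [reflexivity| |lia].
      intros; lia. }
    specialize (H1 x0 (or_introl eq_refl)). specialize (H2 x0 (or_introl eq_refl)).
    rewrite E in H1. destruct H1 as [_ H1]. specialize (H1 eq_refl).
    destruct H2 as [H2 _]. specialize (H2 H1). discriminate.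
  - assert (HK2 : (2 <= K)%nat) by lia.
    set (m := length xs).
    destruct (collect n beta (fun x i y => exists rho t, I rho /\ (t <= n)%nat /\
        y = snd (gstate_at n sigma rule init rho x t) i)) with (xs := xs) as [V [HV1 HV2]].
    { intros x i Hi. destruct (Hb x i Hi) as [L [HL1 HL2]]. exists L. split; [exact HL1|].
      intros y [rho [t [Ir [Ht ->]]]]. apply HL2; assumption. }
    destruct (breakpoints kappa I sigma Hk (list_prod V V)) as [B [HB1 HB2]].
    set (cntlt := fun rho => length (filter (fun c => if Rlt_dec c rho then true else false) B)).
    set (cntle := fun rho => length (filter (fun c => if Rle_dec c rho then true else false) B)).
    assert (Hhalf : forall rho1 rho2, I rho1 -> I rho2 -> rho1 < rho2 ->
        cntlt rho1 = cntlt rho2 -> cntle rho1 = cntle rho2 ->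
        forall x, In x xs -> gsolution n sigma rule init rho1 x = gsolution n sigma rule init rho2 x).
    { intros rho1 rho2 I1 I2 H12 Elt Ele x Hx.
      assert (Hnb : forall c, rho1 <= c <= rho2 -> ~ In c B).
      { intros c Hc HcB. destruct (Req_dec c rho1) as [->|Hne].
        - assert (cntlt rho1 < cntlt rho2)%nat; [|lia].
          apply (filter_strict _ _ B rho1); auto.
          + intros c. destruct Rlt_dec, Rlt_dec; auto; lra.
          + destruct Rlt_dec; auto; lra.
          + destruct Rlt_dec; auto; lra.
        - assert (cntle rho1 < cntle rho2)%nat; [|lia].
          apply (filter_strict _ _ B c); auto.
          + intros c'. destruct Rle_dec, Rle_dec; auto; lra.
          + destruct Rle_dec; auto; lra.
          + destruct Rle_dec; auto; lra. }
      assert (Hcmp : forall a b, In a V -> In b V ->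
          (sigma rho1 a < sigma rho1 b <-> sigma rho2 a < sigma rho2 b)).
      { intros a b Ha Hb'. destruct (classic (a = b)) as [->|Hab]; [split; lra|].
        assert (Hs := sign_const I (fun r => sigma r a - sigma r b) rho1 rho2 HI I1 I2 H12
                       (cont_diff I _ _ (Hcont a) (Hcont b))).
        simpl in Hs.
        assert (Hs' : sigma rho1 a - sigma rho1 b < 0 <-> sigma rho2 a - sigma rho2 b < 0).
        { apply Hs. intros rr Hrr Heq. apply (Hnb rr Hrr).
          apply (HB2 a b); auto.
          - apply in_prod; auto.
          - eapply HI; [exact I1|exact I2|lra|lra].
          - lra. }
        split; intro Hx0; [assert (Hy0 := proj1 Hs' ltac:(lra))|assert (Hy0 := proj2 Hs' ltac:(lra))]; lra. }
      unfold gsolution. rewrite (states_eq _ _ _ n sigma rule init x rho1 rho2); [reflexivity| |lia].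
      intros t Ht j l Hj Hl _. simpl. apply Hcmp.
      - apply (HV2 x j); auto. exists rho1, t. repeat split; auto; lia.
      - apply (HV2 x l); auto. exists rho1, t. repeat split; auto; lia. }
    assert (Hsame : forall rho1 rho2, I rho1 -> I rho2 ->
        cntlt rho1 = cntlt rho2 -> cntle rho1 = cntle rho2 ->
        forall x, In x xs -> gsolution n sigma rule init rho1 x = gsolution n sigma rule init rho2 x).
    { intros rho1 rho2 I1 I2 E1 E2 x Hx.
      destruct (Rtotal_order rho1 rho2) as [H|[->|H]]; [auto|reflexivity|].
      symmetry; apply Hhalf; auto. }
    set (T := fun (l : list bool) x => nth (idx xs x) l false).
    set (F := fun l => proj1_sig (constructive_indefinite_description _ (Hsh (T l)))).
    assert (HF : forall l, I (F l) /\ forall x, In x xs ->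
        (cost x (gsolution n sigma rule init (F l) x) > r x <-> T l x = true)).
    { intro l. unfold F. destruct constructive_indefinite_description as [rho Hr]. exact Hr. }
    set (g := fun l => (cntlt (F l), cntle (F l))).
    assert (Hinj : forall l1 l2, In l1 (blists m) -> In l2 (blists m) -> g l1 = g l2 -> l1 = l2).
    { intros l1 l2 H1 H2 Eg. unfold g in Eg. injection Eg as E1 E2.
      destruct (HF l1) as [I1 P1]. destruct (HF l2) as [I2 P2].
      assert (HT : forall x, In x xs -> T l1 x = T l2 x).
      { intros x Hx. specialize (P1 x Hx). specialize (P2 x Hx).
        rewrite (Hsame _ _ I1 I2 E1 E2 x Hx) in P1.
        destruct (T l1 x), (T l2 x); auto; exfalso; assert (false = true) by tauto; discriminate. }
      apply blists_in in H1. apply blists_in in H2.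
      apply (nth_ext _ _ false false); [congruence|].
      intros i Hi. destruct xs as [|x0 xs0]; [simpl in *; subst m; lia|].
      specialize (HT (nth i (x0 :: xs0) x0) ltac:(apply nth_In; subst m; lia)).
      unfold T in HT. rewrite idx_nth in HT; auto. subst m; lia. }
    assert (Hcount : (2 ^ m <= S (length B) * S (length B))%nat).
    { rewrite <- blists_len.
      rewrite <- (length_map g).
      replace (S (length B) * S (length B))%nat with
        (length (list_prod (seq 0 (S (length B))) (seq 0 (S (length B))))) by
        (rewrite length_prod, length_seq; reflexivity).
      apply NoDup_incl_length.
      - apply Injective_map_NoDup_in; [exact Hinj| apply blists_nodup].
      - intros [u v] Huv. apply in_map_iff in Huv. destruct Huv as [l [Eg _]].
        unfold g in Eg. injection Eg as <- <-. apply in_prod; apply in_seq;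
          [pose proof (filter_length_le (fun c => if Rlt_dec c (F l) then true else false) B)
          |pose proof (filter_length_le (fun c => if Rle_dec c (F l) then true else false) B)];
          unfold cntlt, cntle; lia. }
    assert (Hbig : (S (length B) <= m*m*(K*K) + 1)%nat).
    { rewrite length_prod in HB1.
      assert (Hk1 : (1 <= kappa)%nat) by (unfold K in *; nia).
      assert (HVV : (length V * length V <= (m*n*beta) * (m*n*beta))%nat)
        by (apply Nat.mul_le_mono; exact HV1).
      assert (kappa * ((m*n*beta) * (m*n*beta)) <= m*m*(K*K))%nat.
      { unfold K. replace (m*m*(kappa*beta*n*(kappa*beta*n)))%nat with
          (kappa * ((m*n*beta) * (m*n*beta)) * kappa)%nat by ring. nia. }
      assert (kappa * (length V * length V) <= kappa * ((m*n*beta) * (m*n*beta)))%nat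
        by (apply Nat.mul_le_mono_l; exact HVV).
      lia. }
    assert (Hm : (m <= 55 * Nat.log2 K)%nat).
    { apply arith_main; [exact HK2|]. eapply Nat.le_trans; [exact Hcount|].
      apply Nat.mul_le_mono; exact Hbig. }
    destruct (Nat.log2_spec K) as [Hk2 _]; [lia|].
    set (k := Nat.log2 K) in *.
    assert (Hlnk : INR k * ln 2 <= ln (INR K)).
    { rewrite <- ln_pow by lra.
      assert (E : 2 ^ k = INR (2 ^ k)) by (rewrite pow_INR; reflexivity).
      rewrite E. apply le_INR in Hk2.
      assert (0 < INR (2^k)) by (apply lt_0_INR; apply Nat.neq_0_lt_0; apply Nat.pow_nonzero; lia).
      destruct (Rle_lt_or_eq_dec _ _ Hk2) as [Hlt|Heq]; [left; apply ln_increasing; auto|rewrite Heq; right; reflexivity]. }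
    apply le_INR in Hm. rewrite mult_INR in Hm. replace (INR 55) with 55 in Hm by (simpl; lra).
    unfold Rdiv. 
    apply Rle_trans with (55 * INR k); [lra|].
    apply Rmult_le_reg_r with (ln 2); [exact Hln2|].
    replace (55 * / ln 2 * ln (INR K) * ln 2) with (55 * ln (INR K)) by (field; lra).
    lra.
Qed.
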